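(* Let $X\subseteq\mathbb{R}^d$ be a finite set of arms with $\|x\|_2\le1$ for all $x\in X$. Let $\theta^*\in\mathbb{R}^d$ be such that $x_*=\arg\max_{x\in X}x^\top\theta^*$ is unique, and for $x\in X$ set $\Delta_x=(x_*-x)^\top\theta^*$. Then for every $L>0$, $$L\cdot\rho\big(\mathcal{Y}(\{z\in X:\Delta_z\le 15/\sqrt L\})\big)\le 900\,\psi^*.$$
   Context: For $S\subseteq X$, $\mathcal{Y}(S)=\{x-x':x,x'\in S,\ x\ne x'\}$. Let $\Delta^X=\{\lambda\in\mathbb{R}^{|X|}:\lambda\ge0,\ \sum_{x\in X}\lambda_x=1\}$, and for $\lambda\in\Delta^X$ let $A(\lambda)=\sum_{x\in X}\lambda_xxx^\top$. Write $\|y\|_M^2=y^\top My$. For a set $A\subseteq\mathbb{R}^d$, the optimal design value is $\rho(A)=\min_{\lambda\in\Delta^X}\max_{y\in A}\|y\|^2_{A(\lambda)^{-1}}$. The instance complexity is $$\psi^*=\min_{\lambda\in\Delta^X}\max_{x\in X\setminus\{x_*\}}\frac{\|x-x_*\|^2_{A(\lambda)^{-1}}}{\big((x_*-x)^\top\theta^*\big)^2}.$$ *)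

(* Defs.v *)
From mathcomp Require Import all_boot all_order all_algebra.
From mathcomp Require Import boolp classical_sets reals constructive_ereal ereal.
Set Implicit Arguments. Unset Strict Implicit. Unset Printing Implicit Defensive.
Import Order.TTheory GRing.Theory Num.Theory.
Local Open Scope ring_scope.
Local Open Scope classical_set_scope.

Section Defs.
Variables (R : realType) (d K : nat).
(* The arm set X is {x i | i : 'I_K}, with x injective. *)
Variable x : 'I_K -> 'cV[R]_d.

Definition dotv (u v : 'cV[R]_d) : R := (u^T *m v) 0 0.

Definition sqnorm (u : 'cV[R]_d) : R := dotv u u.

Definition simplex : set ('I_K -> R) :=
  [set lam | (forall i, 0 <= lam i) /\ \sum_(i < K) lam i = 1].

Definition Amat (lam : 'I_K -> R) : 'M[R]_d :=
  \sum_(i < K) lam i *: (x i *m (x i)^T).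

(* ||y||^2_{A(lambda)^{-1}}, taken to be +oo when A(lambda) is singular *)
Definition invnorm2 (lam : 'I_K -> R) (y : 'cV[R]_d) : \bar R :=
  if Amat lam \in unitmx then ((y^T *m invmx (Amat lam) *m y) 0 0)%:E
  else +oo%E.

Definition Yset (S : set 'I_K) : set 'cV[R]_d :=
  [set y | exists i j, [/\ S i, S j, x i != x j & y = x i - x j]].

Definition rho (A : set 'cV[R]_d) : \bar R :=
  ereal_inf [set ereal_sup [set invnorm2 lam y | y in A] | lam in simplex].

Variable theta : 'cV[R]_d.
Variable istar : 'I_K.

Definition gap (i : 'I_K) : R := dotv (x istar - x i) theta.

Definition psi_star : \bar R :=
  ereal_inf [set ereal_sup
     [set (invnorm2 lam (x i - x istar) * ((gap i ^+ 2)^-1)%:E)%E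
        | i in [set i | x i != x istar]]
   | lam in simplex].

End Defs.

(* Main.v *)
Require Import Defs.
From mathcomp Require Import all_boot all_order all_algebra.
From mathcomp Require Import boolp classical_sets reals constructive_ereal ereal.
From mathcomp Require Import ring lra.
Import Order.TTheory GRing.Theory Num.Theory.
Local Open Scope ring_scope.

Lemma trE (R : Type) m n (M : 'M[R]_(m,n)) i j : M^T i j = M j i.
Proof. by rewrite /trmx mxE. Qed.

Lemma quad_ge0 (R: realType) d K (x : 'I_K -> 'cV[R]_d) lam (v : 'cV[R]_d) :
 (forall i, 0 <= lam i) -> Amat x lam \in unitmx ->
 0 <= (v^T *m invmx (Amat x lam) *m v) 0 0.
Proof.
move=> lam0 Au.
set A := Amat x lam.
set w := invmx A *m v.
have hv : v = A *m w by rewrite /w mulmxA mulmxV // mul1mx.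
have hw : invmx A *m v = w by [].
clearbody w.
have -> : (v^T *m invmx A *m v) = (w^T *m A *m w)^T.
  rewrite -mulmxA.
  rewrite hw.
  rewrite [in LHS]hv !trmx_mul trmxK mulmxA //.
rewrite trE /A /Amat mulmx_sumr mulmx_suml summxE; apply: sumr_ge0 => i _.
rewrite -scalemxAr -scalemxAl mxE mulr_ge0 //.
rewrite mulmxA -[(_ *m (x i)^T) *m w]mulmxA mxE big_ord1.
have -> : (x i)^T *m w = (w^T *m x i)^T by rewrite trmx_mul trmxK.
rewrite trE; by rewrite -expr2 sqr_ge0.
Qed.

Lemma quad_par (R : realType) d (M : 'M[R]_d) (u w : 'cV[R]_d) :
 (((u - w)^T *m M *m (u - w)) 0 0) + (((u + w)^T *m M *m (u + w)) 0 0)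
 = 2 * ((u^T *m M *m u) 0 0) + 2 * ((w^T *m M *m w) 0 0).
Proof.
rewrite !linearB !linearD /=.
rewrite !mulmxBl !mulmxDl !mxE; ring.
Qed.

Lemma entryB (R : pzRingType) m n (A B : 'M[R]_(m,n)) i j : (A - B) i j = A i j - B i j.
Proof. by rewrite !mxE. Qed.

Local Open Scope classical_set_scope.

Theorem lemma1 (R : realType) (d K : nat) (x : 'I_K -> 'cV[R]_d)
  (x_inj : injective x)
  (x_norm : forall i, sqnorm (x i) <= 1)
  (theta : 'cV[R]_d) (istar : 'I_K)
  (istar_uniq : forall i, i != istar -> dotv (x i) theta < dotv (x istar) theta)
  (L : R) (L_pos : 0 < L) :
  (L%:E * rho x (Yset x [set z | (gap x theta istar z <= 15 / Num.sqrt L)%R]) <=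
   900%:E * psi_star x theta istar)%E.
Proof.
set S := [set z | _].
have gap_pos : forall i, i != istar -> 0 < gap x theta istar i.
  move=> i hi; rewrite /gap /dotv linearB /= mulmxBl entryB subr_gt0.
  exact: istar_uniq.
have gap_le : forall i, S i -> gap x theta istar i ^+ 2 <= 225 / L.
  move=> i Si; have [->|hi] := eqVneq i istar.
    rewrite /gap /dotv subrr linear0 mul0mx mxE expr0n /=.
    by rewrite divr_ge0 // ltW.
  have g0 := gap_pos i hi.
  apply: (@le_trans _ _ ((15 / Num.sqrt L) ^+ 2)).
    by rewrite !expr2; apply: ler_pM => //; apply: ltW.
  rewrite expr_div_n sqr_sqrtr; last exact: ltW.
  rewrite -natrX; exact: lexx.
have r0 : 0 < 900 / L by apply: divr_gt0; [rewrite ltr0n | exact: L_pos].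
set psi := fun lam => ereal_sup [set (invnorm2 x lam (x i - x istar) * ((gap x theta istar i ^+ 2)^-1)%:E)%E
        | i in [set i | x i != x istar]].
have key : forall lam, simplex lam ->
  (ereal_sup [set invnorm2 x lam y | y in Yset x S] <= (900 / L)%:E * psi lam)%E.
  move=> lam [lam0 lamsum].
  apply: ge_ereal_sup => _ [y [i [j [Si Sj xij ->]]] <-].
  have Pm : forall m, m != istar ->
    (invnorm2 x lam (x m - x istar) * ((gap x theta istar m ^+ 2)^-1)%:E <= psi lam)%E.
    move=> m hm; apply: ereal_sup_ubound; exists m => //=.
    by apply: contraNN hm => /eqP /x_inj ->.
  have [k hk] : exists k, k != istar.
    have [ei|hi] := eqVneq i istar; last by exists i.
    exists j; apply: contraNN xij => /eqP ->; by rewrite ei.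
  have Pk := Pm k hk.
  have gk := gap_pos k hk.
  rewrite /invnorm2 in Pm Pk *.
  case: ifP => Au; last first.
    rewrite Au mulyr gtr0_sg ?mul1e in Pk; last by rewrite invr_gt0 exprn_gt0.
    move: Pk; rewrite leye_eq => /eqP ->.
    by rewrite mulry gtr0_sg ?mul1e; last exact: r0.
  rewrite Au in Pm Pk.
  set q := fun v : 'cV[R]_d => (v^T *m invmx (Amat x lam) *m v) 0 0.
  have q0 : forall v, 0 <= q v by move=> v; exact: quad_ge0.
  case E: (psi lam) => [p| |]; last first.
  - by move: Pk; rewrite E -EFinM leeNy_eq.
  - rewrite mulry gtr0_sg ?mul1e ?leey //; exact: r0.
  rewrite E in Pm Pk.
  rewrite -EFinM lee_fin in Pk.
  have gk2 : 0 < (gap x theta istar k ^+ 2)^-1 by rewrite invr_gt0 exprn_gt0.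
  have p0 : 0 <= p := le_trans (mulr_ge0 (q0 _) (ltW gk2)) Pk.
  have bnd : forall m, S m -> q (x m - x istar) <= p * (225 / L).
    move=> m Sm; have [->|hm] := eqVneq m istar.
      rewrite /q subrr.
      rewrite mulmx0 mxE.
      apply: mulr_ge0; first exact: p0.
      apply: divr_ge0; [exact: ler0n | exact: ltW].
    have Pm' := Pm m hm; rewrite -EFinM lee_fin in Pm'.
    have gm := gap_pos m hm.
    have gl := gap_le m Sm.
    rewrite ler_pdivrMr in Pm'; last by rewrite exprn_gt0.
    apply: (le_trans Pm'); exact: ler_wpM2l.
  have par := @quad_par _ _ (invmx (Amat x lam)) (x i - x istar) (x j - x istar).
  have h1 := q0 ((x i - x istar) + (x j - x istar)).
  have hij : (x i - x istar) - (x j - x istar) = x i - x j by rewrite opprB addrA subrK.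
  rewrite hij in par.
  have bi := bnd i Si.
  have bj := bnd j Sj.
  rewrite -EFinM lee_fin.
  have -> : 900 / L * p = 4 * (p * (225 / L)) by ring.
  rewrite /q in h1 bi bj.
  set t := p * (225 / L) in bi bj *.
  lra.
suff H : (rho x (Yset x S) <= (900 / L)%:E * psi_star x theta istar)%E.
  apply: (le_trans (lee_wpmul2l _ H)); first by rewrite lee_fin; exact: ltW.
  rewrite muleA -EFinM mulrCA divff; first by rewrite mulr1.
  by rewrite gt_eqF.
rewrite -lee_pdivrMl; last exact: r0.
apply: le_ereal_inf_tmp => _ [lam hlam <-].
rewrite lee_pdivrMl; last exact: r0.
apply: le_trans (key lam hlam).
by apply: ereal_inf_lbound; exists lam.
Qed.
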